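(* Let $t$ be a normal λ-term, $A_1,\dots,A_n\in\Omega^-$, $A\in\Omega^+$ such that $\perp$ does not appear in $A_1,\dots,A_n,A$, and let $B_1,\dots,B_m$ be $\perp$-types. If $x_1:A_1,\dots,x_n:A_n,y_1:B_1,\dots,y_m:B_m\vdash_{TTR}t:A$, then $x_1:A_1,\dots,x_n:A_n\vdash_{TTR}t:A$.
   Context: $TTR$ types: over a second-order language with first-order variables, function symbols, $n$-ary predicate variables and symbols, and a fixed system $\mathbf E$ of equations; atomic $\perp$ and $X(t_1,\dots,t_n)$; constructors $\to$, $\forall x$, $\forall X$, and $\mu Cx_1\dots x_nA\langle t_1,\dots,t_n\rangle$ for $C$ an $n$-ary predicate symbol occurring and positive in $A$. Subtyping $\subseteq$ is generated by: reflexivity; $A\subseteq A',B\subseteq B'\Rightarrow A'\to B\subseteq A\to B'$; $A[G/v]\subseteq B\Rightarrow\forall vA\subseteq B$; $A\subseteq B\Rightarrow A\subseteq\forall vB$ ($v$ not free in $A$); $A\subseteq B[v/y]\Rightarrow A\subseteq B[w/y]$ for $v=w$ an instance of an equation of $\mathbf E$; transitivity; $D[\mu C\bar xD\langle\bar z\rangle/C(\bar z)][\bar t/\bar x]\subseteq\mu C\bar xD\langle\bar t\rangle$ and its converse; $D[E/C(\bar x)]\subseteq E\Rightarrow\mu C\bar xD\langle\bar t\rangle\subseteq E[\bar t/\bar x]$. Typing $\vdash_{TTR}$: variable axiom; $\to$-intro/elim; $\forall$-intro (variable not free in context) and elimination for first- and second-order variables; equational rule; subsumption along $\subseteq$; rule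 (Y): from $\Gamma\vdash t:\forall\bar x[C(\bar x)\to E]\to\forall\bar x[D\to E]$ infer $\Gamma\vdash(Y)t:\forall\bar x[\mu C\bar xD\langle\bar x\rangle\to E]$ ($C$ not free in $E$ nor $\Gamma$; $Y$ Turing's fixed point combinator). $\Omega^+$, $\Omega^-$: atomic types in both; $T^-\to T^+\in\Omega^+$, $T^+\to T^-\in\Omega^-$ for $T^\pm\in\Omega^\pm$; $\forall xT^+,\forall XT^+\in\Omega^+$; $\forall xT^-\in\Omega^-$, and $\forall XT^-\in\Omega^-$ if $X$ not free in $T^-$; $\mu C\bar xT^+\langle\bar t\rangle\in\Omega^+$ for $C$ occurring and positive in $T^+\in\Omega^+$. $\perp$-types: $\perp$; and $B\to A$, $\forall vA$, $\mu C\bar xA\langle\bar t\rangle$ whenever $A$ is a $\perp$-type. *)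

(* Defs.v *)
(* Locally nameless style: all bindings in TYPES use de Bruijn
   indices; lambda-term variables are named (nat).

   Namespaces of type-level variables:
   - first-order variables: de Bruijn indices (FVar i);
   - predicate VARIABLES (bound by the second-order forall): an n-ary predicate
     variable is an index in the namespace of arity n; the arity of an atom
     PV X args is (length args).  So PV X l refers to the X-th enclosing
     All2 (length l) binder (or to a free n-ary variable);
   - predicate SYMBOLS (bound by mu, or free): likewise, PS C l, namespace of
     arity (length l), bound by Mu (length l).
   Function symbols: FApp f l is the symbol (f, length l) applied to l. *)
From Stdlib Require Import List Arith PeanoNat.
Import ListNotations.

Inductive fterm : Type :=
| FVar (i : nat)
| FApp (f : nat) (args : list fterm).

Inductive ty : Type :=
| Bot
| PV (X : nat) (args : list fterm)
| PS (C : nat) (args : list fterm)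
| Arr (A B : ty)
| All1 (A : ty)
| All2 (n : nat) (A : ty)
| Mu (n : nat) (D : ty) (ts : list fterm).
(* Mu n D ts = mu C x1..xn D <t1..tn> : binds the n-ary symbol C (index 0 of
   arity n) and the first-order variables x1..xn in D, x_i being the fo index
   n-i (x_n is index 0); ts are outside these binders. *)

Fixpoint fsub (s : nat -> fterm) (t : fterm) : fterm :=
  match t with
  | FVar i => s i
  | FApp f l => FApp f (map (fsub s) l)
  end.

Definition shiftf (k : nat) : nat -> fterm := fun j => FVar (k + j).

Definition up_f (s : nat -> fterm) : nat -> fterm :=
  fun i => match i with 0 => FVar 0 | S i' => fsub (shiftf 1) (s i') end.

Fixpoint upn_f (k : nat) (s : nat -> fterm) : nat -> fterm :=
  match k with 0 => s | S k' => up_f (upn_f k' s) end.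

(** params m = [x1; ...; xm] = [FVar (m-1); ...; FVar 0] *)
Definition params (m : nat) : list fterm := map FVar (rev (seq 0 m)).

(** inst_f m args: xi := i-th arg, other variables shifted down by m *)
Definition inst_f (m : nat) (args : list fterm) : nat -> fterm :=
  fun j => if j <? m then nth (m - 1 - j) args (FVar 0) else FVar (j - m).

(** renamings of predicate namespaces: arity -> index -> index *)
Definition idr : nat -> nat -> nat := fun _ i => i.
Definition up_p (n : nat) (z : nat -> nat -> nat) : nat -> nat -> nat :=
  fun m i => if m =? n then match i with 0 => 0 | S i' => S (z m i') end
             else z m i.
Definition shift_p (n : nat) : nat -> nat -> nat :=
  fun m i => if m =? n then S i else i.

(** fo substitution + renaming of predicate variables and symbols *)
Fixpoint tfsub (s : nat -> fterm) (zv zs : nat -> nat -> nat) (A : ty) : ty :=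
  match A with
  | Bot => Bot
  | PV X l => PV (zv (length l) X) (map (fsub s) l)
  | PS C l => PS (zs (length l) C) (map (fsub s) l)
  | Arr A B => Arr (tfsub s zv zs A) (tfsub s zv zs B)
  | All1 A => All1 (tfsub (up_f s) zv zs A)
  | All2 n A => All2 n (tfsub s (up_p n zv) zs A)
  | Mu n D ts => Mu n (tfsub (upn_f n s) zv (up_p n zs) D) (map (fsub s) ts)
  end.

(** Full simultaneous substitution.  pv m X (resp. ps m C) is the formula with
    m parameters (fo indices 0..m-1, x_i = index m-i) replacing the m-ary
    predicate variable X (resp. symbol C). *)
Definition idpv : nat -> nat -> ty := fun m X => PV X (params m).
Definition idps : nat -> nat -> ty := fun m C => PS C (params m).

Definition up1 (p : nat -> nat -> ty) : nat -> nat -> ty :=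
  fun m X => tfsub (upn_f m (shiftf 1)) idr idr (p m X).
Definition up2v (n : nat) (p : nat -> nat -> ty) : nat -> nat -> ty :=
  fun m X => if m =? n then
               match X with 0 => PV 0 (params n)
                          | S X' => tfsub FVar (shift_p n) idr (p m X') end
             else tfsub FVar (shift_p n) idr (p m X).
Definition up2o (n : nat) (p : nat -> nat -> ty) : nat -> nat -> ty :=
  fun m X => tfsub FVar (shift_p n) idr (p m X).
Definition upmu_o (n : nat) (p : nat -> nat -> ty) : nat -> nat -> ty :=
  fun m X => tfsub (upn_f m (shiftf n)) idr (shift_p n) (p m X).
Definition upmu_s (n : nat) (p : nat -> nat -> ty) : nat -> nat -> ty :=
  fun m C => if m =? n then
               match C with 0 => PS 0 (params n)
                          | S C' => tfsub (upn_f m (shiftf n)) idr (shift_p n) (p m C') end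
             else tfsub (upn_f m (shiftf n)) idr (shift_p n) (p m C).

Fixpoint tsub (s : nat -> fterm) (pv ps : nat -> nat -> ty) (A : ty) : ty :=
  match A with
  | Bot => Bot
  | PV X l => tfsub (inst_f (length l) (map (fsub s) l)) idr idr (pv (length l) X)
  | PS C l => tfsub (inst_f (length l) (map (fsub s) l)) idr idr (ps (length l) C)
  | Arr A B => Arr (tsub s pv ps A) (tsub s pv ps B)
  | All1 A => All1 (tsub (up_f s) (up1 pv) (up1 ps) A)
  | All2 n A => All2 n (tsub s (up2v n pv) (up2o n ps) A)
  | Mu n D ts => Mu n (tsub (upn_f n s) (upmu_o n pv) (upmu_s n ps) D) (map (fsub s) ts)
  end.

(* B[u/y] where y is the fo variable of index 0 *)
Definition subst1 (B : ty) (u : fterm) : ty :=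
  tsub (fun j => match j with 0 => u | S j' => FVar j' end) idpv idps B.
(* A[G/X], X the n-ary predicate variable of index 0, G with n parameters *)
Definition subst2 (n : nat) (A G : ty) : ty :=
  tsub FVar (fun m X => if m =? n then match X with 0 => G | S X' => PV X' (params m) end
                        else PV X (params m)) idps A.
(* weakenings: "v not free in A" *)
Definition lift1 (A : ty) : ty := tfsub (shiftf 1) idr idr A.
Definition liftv (n : nat) (A : ty) : ty := tfsub FVar (shift_p n) idr A.
Definition lifts (n : nat) (A : ty) : ty := tfsub FVar idr (shift_p n) A.
(* A[t1..tn / x1..xn] for A with n parameters *)
Definition instx (n : nat) (A : ty) (ts : list fterm) : ty :=
  tsub (inst_f n ts) idpv idps A.
(* D[E/C(x1..xn)] : D body of a mu (n params, symbol C = index 0 of arity n),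
   E a formula with n parameters x1..xn (living in the outer context) *)
Definition substC (n : nat) (D E : ty) : ty :=
  tsub FVar idpv
    (fun m C => if m =? n then
                  match C with 0 => tfsub (upn_f n (shiftf n)) idr idr E
                             | S C' => PS C' (params m) end
                else PS C (params m)) D.
(* D[mu C x D <z>/C(z)][t/x] *)
Definition unfold (n : nat) (D : ty) (ts : list fterm) : ty :=
  tsub (inst_f n ts) idpv
    (fun m C => if m =? n then
                  match C with 0 => Mu n (tfsub (upn_f n (shiftf n)) idr idr D) (params n)
                             | S C' => PS C' (params m) end
                else PS C (params m)) D.
Definition Alln (n : nat) (A : ty) : ty := Nat.iter n All1 A.

Fixpoint sym_occ (n k : nat) (A : ty) : Prop :=
  match A with
  | Bot | PV _ _ => False
  | PS C l => length l = n /\ C = k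
  | Arr A B => sym_occ n k A \/ sym_occ n k B
  | All1 A | All2 _ A => sym_occ n k A
  | Mu m D _ => sym_occ n (if m =? n then S k else k) D
  end.

(* occurrence of the symbol (n,k) with polarity p (true = positive) *)
Fixpoint sym_occ_pol (n k : nat) (p : bool) (A : ty) : Prop :=
  match A with
  | Bot | PV _ _ => False
  | PS C l => length l = n /\ C = k /\ p = true
  | Arr A B => sym_occ_pol n k (negb p) A \/ sym_occ_pol n k p B
  | All1 A | All2 _ A => sym_occ_pol n k p A
  | Mu m D _ => sym_occ_pol n (if m =? n then S k else k) p D
  end.

Fixpoint pv_occ (n k : nat) (A : ty) : Prop :=
  match A with
  | Bot | PS _ _ => False
  | PV X l => length l = n /\ X = k
  | Arr A B => pv_occ n k A \/ pv_occ n k B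
  | All1 A => pv_occ n k A
  | All2 m A => pv_occ n (if m =? n then S k else k) A
  | Mu _ D _ => pv_occ n k D
  end.

Fixpoint wf (A : ty) : Prop :=
  match A with
  | Bot | PV _ _ | PS _ _ => True
  | Arr A B => wf A /\ wf B
  | All1 A | All2 _ A => wf A
  | Mu n D ts => length ts = n /\ sym_occ n 0 D /\ ~ sym_occ_pol n 0 false D /\ wf D
  end.

Fixpoint no_bot (A : ty) : Prop :=
  match A with
  | Bot => False
  | PV _ _ | PS _ _ => True
  | Arr A B => no_bot A /\ no_bot B
  | All1 A | All2 _ A => no_bot A
  | Mu _ D _ => no_bot D
  end.

Inductive omp : ty -> Prop :=
| omp_bot : omp Bot
| omp_pv X l : omp (PV X l)
| omp_ps C l : omp (PS C l)
| omp_arr A B : omn A -> omp B -> omp (Arr A B)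
| omp_all1 A : omp A -> omp (All1 A)
| omp_all2 n A : omp A -> omp (All2 n A)
| omp_mu n D ts : omp D -> sym_occ n 0 D -> ~ sym_occ_pol n 0 false D -> omp (Mu n D ts)
with omn : ty -> Prop :=
| omn_bot : omn Bot
| omn_pv X l : omn (PV X l)
| omn_ps C l : omn (PS C l)
| omn_arr A B : omp A -> omn B -> omn (Arr A B)
| omn_all1 A : omn A -> omn (All1 A)
| omn_all2 n A : omn A -> ~ pv_occ n 0 A -> omn (All2 n A).

Inductive botty : ty -> Prop :=
| bt_bot : botty Bot
| bt_arr B A : botty A -> botty (Arr B A)
| bt_all1 A : botty A -> botty (All1 A)
| bt_all2 n A : botty A -> botty (All2 n A)
| bt_mu n A ts : botty A -> botty (Mu n A ts).

Definition eq_inst (E : fterm -> fterm -> Prop) (v w : fterm) : Prop :=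
  exists u1 u2 (s : nat -> fterm), E u1 u2 /\
    ((v = fsub s u1 /\ w = fsub s u2) \/ (v = fsub s u2 /\ w = fsub s u1)).

Inductive sub (E : fterm -> fterm -> Prop) : ty -> ty -> Prop :=
| sub_refl A : wf A -> sub E A A
| sub_arr A A' B B' : wf (Arr A' B) -> wf (Arr A B') ->
    sub E A A' -> sub E B B' -> sub E (Arr A' B) (Arr A B')
| sub_all1_l A u B : wf (All1 A) -> wf B ->
    sub E (subst1 A u) B -> sub E (All1 A) B
| sub_all2_l n A G B : wf (All2 n A) -> wf G -> wf B ->
    sub E (subst2 n A G) B -> sub E (All2 n A) B
| sub_all1_r A B : wf A -> wf (All1 B) ->
    sub E (lift1 A) B -> sub E A (All1 B)
| sub_all2_r n A B : wf A -> wf (All2 n B) ->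
    sub E (liftv n A) B -> sub E A (All2 n B)
| sub_eq A B v w : wf A -> wf (subst1 B w) -> eq_inst E v w ->
    sub E A (subst1 B v) -> sub E A (subst1 B w)
| sub_trans A B C : wf A -> wf C -> sub E A B -> sub E B C -> sub E A C
| sub_fold n D ts : wf (Mu n D ts) -> wf (unfold n D ts) ->
    sub E (unfold n D ts) (Mu n D ts)
| sub_unfold n D ts : wf (Mu n D ts) -> wf (unfold n D ts) ->
    sub E (Mu n D ts) (unfold n D ts)
| sub_mu_ind n D Ex ts : wf (Mu n D ts) -> wf Ex -> wf (instx n Ex ts) ->
    sub E (substC n D Ex) Ex -> sub E (Mu n D ts) (instx n Ex ts).

Inductive lterm : Type :=
| Var (x : nat)
| Lam (x : nat) (t : lterm)
| App (t u : lterm).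

Fixpoint normal (t : lterm) : Prop :=
  match t with
  | Var _ => True
  | Lam _ t => normal t
  | App t u => normal t /\ normal u /\ (match t with Lam _ _ => False | _ => True end)
  end.

(* Turing's fixed point combinator (lambda x y. y (x x y)) (lambda x y. y (x x y)) *)
Definition Theta0 : lterm :=
  Lam 0 (Lam 1 (App (Var 1) (App (App (Var 0) (Var 0)) (Var 1)))).
Definition Yc : lterm := App Theta0 Theta0.

Definition ctx := list (nat * ty).
Fixpoint lookup (x : nat) (G : ctx) : option ty :=
  match G with
  | [] => None
  | (y, A) :: G' => if x =? y then Some A else lookup x G'
  end.

Inductive typing (E : fterm -> fterm -> Prop) : ctx -> lterm -> ty -> Prop :=
| ty_var G x A : wf A -> lookup x G = Some A -> typing E G (Var x) A
| ty_lam G x t A B : wf (Arr A B) ->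
    typing E ((x, A) :: G) t B -> typing E G (Lam x t) (Arr A B)
| ty_app G t u A B : wf B ->
    typing E G t (Arr A B) -> typing E G u A -> typing E G (App t u) B
| ty_all1_i G t A : wf (All1 A) ->
    typing E (map (fun p => (fst p, lift1 (snd p))) G) t A -> typing E G t (All1 A)
| ty_all2_i G t n A : wf (All2 n A) ->
    typing E (map (fun p => (fst p, liftv n (snd p))) G) t A -> typing E G t (All2 n A)
| ty_all1_e G t A u : wf (subst1 A u) ->
    typing E G t (All1 A) -> typing E G t (subst1 A u)
| ty_all2_e G t n A Gf : wf Gf -> wf (subst2 n A Gf) ->
    typing E G t (All2 n A) -> typing E G t (subst2 n A Gf)
| ty_eq G t A v w : wf (subst1 A w) -> eq_inst E v w ->
    typing E G t (subst1 A v) -> typing E G t (subst1 A w)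
| ty_sub G t A B : wf B -> typing E G t A -> sub E A B -> typing E G t B
| ty_Y G t n D Ex : wf (Alln n (Arr (Mu n (tfsub (upn_f n (shiftf n)) idr idr D) (params n)) Ex)) ->
    typing E (map (fun p => (fst p, lifts n (snd p))) G) t
      (Arr (Alln n (Arr (PS 0 (params n)) (lifts n Ex))) (Alln n (Arr D (lifts n Ex)))) ->
    typing E G (App Yc t)
      (Alln n (Arr (Mu n (tfsub (upn_f n (shiftf n)) idr idr D) (params n)) Ex)).

(* Main.v *)
Require Import Defs.
From Stdlib Require Import List Arith PeanoNat Bool Lia.
Import ListNotations.

Fixpoint Bad (b : bool) (A : ty) : Prop :=
  match A with
  | Bot => b = true
  | PV _ _ | PS _ _ => False
  | Arr A B => Bad (negb b) A \/ Bad b B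
  | All1 A => Bad b A
  | All2 n A => Bad b A \/ (b = false /\ pv_occ n 0 A)
  | Mu n D _ => Bad b D \/ b = false
  end.

Lemma length_params n : length (params n) = n.
Proof. unfold params. rewrite length_map, length_rev, length_seq. reflexivity. Qed.

Lemma shift_inj m n k j :
  (if m =? n then S k else k) = (if n =? m then S j else j) -> k = j.
Proof.
  destruct (Nat.eqb_spec m n); destruct (Nat.eqb_spec n m); intros H; try lia.
Qed.

Lemma T1 : forall A s zv zs m j,
  pv_occ m j (tfsub s zv zs A) <-> exists k, zv m k = j /\ pv_occ m k A.
Proof.
  induction A; intros s zv zs m j; simpl.
  - split; [tauto| intros [k [_ H]]; exact H].
  - rewrite length_map. split.
    + intros [H1 H2]. exists X. subst. auto.
    + intros [k [H1 [H2 H3]]]. subst. auto.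
  - split; [tauto| intros [k [_ H]]; exact H].
  - rewrite IHA1, IHA2. split.
    + intros [[k [H1 H2]]|[k [H1 H2]]]; exists k; auto.
    + intros [k [H1 [H2|H2]]]; [left|right]; exists k; auto.
  - apply IHA.
  - rewrite IHA. unfold up_p.
    destruct (Nat.eqb_spec n m); destruct (Nat.eqb_spec m n); try lia.
    + subst. split.
      * intros [k [H1 H2]]. destruct k; [discriminate|]. injection H1; intros; subst.
        exists k; auto.
      * intros [k [H1 H2]]. exists (S k). subst; auto.
    + split; intros [k [H1 H2]]; exists k; auto.
  - apply IHA.
Qed.

Lemma up_p_same n z k : up_p n z n k = match k with 0 => 0 | S k' => S (z n k') end.
Proof. unfold up_p. rewrite Nat.eqb_refl. reflexivity. Qed.

Lemma T2 : forall A s zv zs b, Bad b (tfsub s zv zs A) <-> Bad b A.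
Proof.
  induction A; intros s zv zs b; simpl; try tauto.
  - rewrite IHA1, IHA2. tauto.
  - apply IHA.
  - rewrite IHA, T1. split.
    + intros [H|[H1 [k [H2 H3]]]]; [auto|]. right. split; auto.
      rewrite up_p_same in H2. destruct k; [auto|discriminate].
    + intros [H|[H1 H2]]; [auto|]. right. split; auto. exists 0. rewrite up_p_same. auto.
  - rewrite IHA. tauto.
Qed.

Lemma T3 : forall A s zv zs, botty (tfsub s zv zs A) <-> botty A.
Proof.
  induction A; intros s zv zs; simpl; split; intros H; inversion H; subst;
    try constructor; try (eapply IHA2; eauto); try (eapply IHA; eauto);
    try (apply IHA2; auto); try (apply IHA; auto).
Qed.

Lemma T1idr : forall X s zs m j, pv_occ m j (tfsub s idr zs X) <-> pv_occ m j X.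
Proof.
  intros. rewrite T1. unfold idr. split; [intros [k [<- H]]; auto | intros H; exists j; auto].
Qed.

Lemma T1sh : forall X s zs n m j,
  pv_occ m (if n =? m then S j else j) (tfsub s (shift_p n) zs X) <-> pv_occ m j X.
Proof.
  intros. rewrite T1. unfold shift_p. split.
  - intros [k [H1 H2]]. apply shift_inj in H1. subst; auto.
  - intros H. exists j. split; auto.
    destruct (Nat.eqb_spec m n); destruct (Nat.eqb_spec n m); try lia; auto.
Qed.

Lemma T1sh0 : forall X s zs n, ~ pv_occ n 0 (tfsub s (shift_p n) zs X).
Proof.
  intros. rewrite T1. unfold shift_p. rewrite Nat.eqb_refl. intros [k [H _]]. discriminate.
Qed.

Lemma eqb_neq' a b : a <> b -> (a =? b) = false.
Proof. apply Nat.eqb_neq. Qed.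

Lemma U1 : forall A s pv ps m j, pv_occ m j (tsub s pv ps A) ->
  (exists m' k, pv_occ m' k A /\ pv_occ m j (pv m' k)) \/
  (exists m' k, sym_occ m' k A /\ pv_occ m j (ps m' k)).
Proof.
  induction A; intros s pv ps m j H; simpl in H.
  - contradiction.
  - rewrite T1idr in H. left. exists (length args), X. simpl; intuition auto.
  - rewrite T1idr in H. right. exists (length args), C. simpl; intuition auto.
  - destruct H as [H|H]; [apply IHA1 in H|apply IHA2 in H];
      (destruct H as [[m' [k [H1 H2]]]|[m' [k [H1 H2]]]]; [left|right]; exists m', k; simpl; tauto).
  - apply IHA in H. destruct H as [[m' [k [H1 H2]]]|[m' [k [H1 H2]]]];
      unfold up1 in H2; rewrite T1idr in H2; [left|right]; exists m', k; simpl; auto.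
  - apply IHA in H. destruct H as [[m' [k [H1 H2]]]|[m' [k [H1 H2]]]].
    + unfold up2v in H2. destruct (Nat.eqb_spec m' n).
      * subst m'. destruct k.
        -- simpl in H2. rewrite length_params in H2. destruct H2 as [H2 H3]. subst m.
           rewrite Nat.eqb_refl in H3. discriminate.
        -- apply T1sh in H2. left. exists n, k. simpl. rewrite Nat.eqb_refl; intuition auto.
      * apply T1sh in H2. left. exists m', k. simpl. rewrite (eqb_neq' n m') by auto; intuition auto.
    + unfold up2o in H2. apply T1sh in H2. right. exists m', k. simpl; intuition auto.
  - apply IHA in H. destruct H as [[m' [k [H1 H2]]]|[m' [k [H1 H2]]]].
    + unfold upmu_o in H2. rewrite T1idr in H2. left. exists m', k. simpl; intuition auto.
    + unfold upmu_s in H2. destruct (Nat.eqb_spec m' n).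
      * subst m'. destruct k; [simpl in H2; contradiction|].
        rewrite T1idr in H2. right. exists n, k. simpl. rewrite Nat.eqb_refl; intuition auto.
      * rewrite T1idr in H2. right. exists m', k. simpl. rewrite (eqb_neq' n m') by auto; intuition auto.
Qed.

Lemma U2 : forall A s pv ps m' k m j, pv_occ m' k A -> pv_occ m j (pv m' k) ->
  pv_occ m j (tsub s pv ps A).
Proof.
  induction A; intros s pv ps m' k m j H1 H2; simpl in H1; simpl.
  - contradiction.
  - destruct H1; subst. rewrite T1idr. auto.
  - contradiction.
  - destruct H1; [left; eapply IHA1|right; eapply IHA2]; eauto.
  - eapply IHA; eauto. unfold up1. rewrite T1idr. auto.
  - eapply IHA; eauto. unfold up2v. destruct (Nat.eqb_spec m' n).
    + subst m'. rewrite Nat.eqb_refl. apply T1sh. auto.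
    + rewrite (eqb_neq' n m') in * by auto. apply T1sh. auto.
  - eapply IHA; eauto. unfold upmu_o. rewrite T1idr. auto.
Qed.

Lemma eqb_negb q b : eqb (negb q) (negb b) = eqb q b.
Proof. destruct q, b; reflexivity. Qed.
Lemma eqb_negb2 q b : eqb q (negb b) = eqb (negb q) b.
Proof. destruct q, b; reflexivity. Qed.

Lemma U3 : forall A s pv ps b, Bad b (tsub s pv ps A) ->
  Bad b A \/ (exists m k b', pv_occ m k A /\ Bad b' (pv m k)) \/
  (exists m k q, sym_occ_pol m k q A /\ Bad (eqb q b) (ps m k)).
Proof.
  induction A; intros s pv ps b H; simpl in H.
  - left. exact H.
  - rewrite T2 in H. right. left. exists (length args), X, b. simpl; intuition auto.
  - rewrite T2 in H. right. right. exists (length args), C, true. simpl. destruct b; intuition auto.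
  - destruct H as [H|H].
    + apply IHA1 in H. destruct H as [H|[[m [k [b' [H1 H2]]]]|[m [k [q [H1 H2]]]]]].
      * left. simpl; intuition auto.
      * right; left. exists m, k, b'. simpl; intuition auto.
      * right; right. exists m, k, (negb q). simpl. rewrite negb_involutive.
        rewrite <- eqb_negb2. auto.
    + apply IHA2 in H. destruct H as [H|[[m [k [b' [H1 H2]]]]|[m [k [q [H1 H2]]]]]].
      * left. simpl; intuition auto.
      * right; left. exists m, k, b'. simpl; intuition auto.
      * right; right. exists m, k, q. simpl; intuition auto.
  - apply IHA in H. destruct H as [H|[[m [k [b' [H1 H2]]]]|[m [k [q [H1 H2]]]]]].
    + left. simpl; intuition auto.
    + right; left. exists m, k, b'. unfold up1 in H2. rewrite T2 in H2. simpl; intuition auto.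
    + right; right. exists m, k, q. unfold up1 in H2. rewrite T2 in H2. simpl; intuition auto.
  - destruct H as [H|[Hb H]].
    + apply IHA in H. destruct H as [H|[[m [k [b' [H1 H2]]]]|[m [k [q [H1 H2]]]]]].
      * left. simpl; intuition auto.
      * unfold up2v in H2. destruct (Nat.eqb_spec m n).
        -- subst m. destruct k; [simpl in H2; contradiction|]. rewrite T2 in H2.
           right; left. exists n, k, b'. simpl. rewrite Nat.eqb_refl; intuition auto.
        -- rewrite T2 in H2. right; left. exists m, k, b'. simpl. rewrite (eqb_neq' n m) by auto; intuition auto.
      * unfold up2o in H2. rewrite T2 in H2. right; right. exists m, k, q. simpl; intuition auto.
    + apply U1 in H. destruct H as [[m' [k [H1 H2]]]|[m' [k [H1 H2]]]].
      * unfold up2v in H2. destruct (Nat.eqb_spec m' n).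
        -- subst m'. destruct k.
           ++ left. simpl; intuition auto.
           ++ exfalso. eapply T1sh0; eauto.
        -- exfalso. eapply T1sh0; eauto.
      * exfalso. unfold up2o in H2. eapply T1sh0; eauto.
  - destruct H as [H|H]; [|left; simpl; auto].
    apply IHA in H. destruct H as [H|[[m [k [b' [H1 H2]]]]|[m [k [q [H1 H2]]]]]].
    + left. simpl; intuition auto.
    + right; left. exists m, k, b'. unfold upmu_o in H2. rewrite T2 in H2. simpl; intuition auto.
    + unfold upmu_s in H2. destruct (Nat.eqb_spec m n).
      * subst m. destruct k; [simpl in H2; contradiction|]. rewrite T2 in H2.
        right; right. exists n, k, q. simpl. rewrite Nat.eqb_refl; intuition auto.
      * rewrite T2 in H2. right; right. exists m, k, q. simpl. rewrite (eqb_neq' n m) by auto; intuition auto.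
Qed.

Lemma U4 : forall A s pv ps b, Bad b A -> Bad b (tsub s pv ps A).
Proof.
  induction A; intros s pv ps b H; simpl in H; simpl; try tauto.
  - destruct H; [left|right]; auto.
  - auto.
  - destruct H as [H|[Hb H]]; [left; auto|right; split; auto].
    eapply U2; eauto. unfold up2v. rewrite Nat.eqb_refl. simpl. rewrite length_params. auto.
  - destruct H; [left|right]; auto.
Qed.

Lemma U5 : forall A s pv ps m k q b, sym_occ_pol m k q A -> Bad (eqb q b) (ps m k) ->
  Bad b (tsub s pv ps A).
Proof.
  induction A; intros s pv ps m k q b H1 H2; simpl in H1; simpl; try contradiction.
  - destruct H1 as [H1 [H3 H4]]. subst. rewrite T2. destruct b; exact H2.
  - destruct H1 as [H1|H1].
    + left. eapply IHA1; eauto. rewrite eqb_negb. auto.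
    + right. eapply IHA2; eauto.
  - eapply IHA; eauto. unfold up1. rewrite T2. auto.
  - left. eapply IHA; eauto. unfold up2o. rewrite T2. auto.
  - left. eapply IHA; eauto. unfold upmu_s. destruct (Nat.eqb_spec m n).
    + subst m. rewrite Nat.eqb_refl. rewrite T2. auto.
    + rewrite (eqb_neq' n m) in * by auto. rewrite T2. auto.
Qed.

Lemma U6 : forall A, botty A -> forall s pv ps, botty (tsub s pv ps A).
Proof. induction 1; intros; simpl; constructor; auto. Qed.

Lemma botty_atom_PV X l : ~ botty (PV X l).
Proof. intro H; inversion H. Qed.
Lemma botty_atom_PS X l : ~ botty (PS X l).
Proof. intro H; inversion H. Qed.

Lemma U6r : forall A s pv ps, botty (tsub s pv ps A) ->
  botty A \/ (exists m k, botty (pv m k)) \/ (exists m k, botty (ps m k)).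
Proof.
  induction A; intros s pv ps H; simpl in H.
  - left; constructor.
  - rewrite T3 in H. right; left; eauto.
  - rewrite T3 in H. right; right; eauto.
  - inversion H; subst. apply IHA2 in H1. destruct H1 as [H1|H1]; [left; constructor; auto|auto].
  - inversion H; subst. match goal with Hb : botty (tsub _ _ _ _) |- _ => apply IHA in Hb; destruct Hb as [H1|[[m [k H1]]|[m [k H1]]]] end.
    + left; constructor; auto.
    + unfold up1 in H1; rewrite T3 in H1. right; left; eauto.
    + unfold up1 in H1; rewrite T3 in H1. right; right; eauto.
  - inversion H; subst. match goal with Hb : botty (tsub _ _ _ _) |- _ => apply IHA in Hb; destruct Hb as [H1|[[m [k H1]]|[m [k H1]]]] end.
    + left; constructor; auto.
    + unfold up2v in H1. destruct (m =? n).
      * destruct k; [simpl in H1; exfalso; eapply botty_atom_PV; eauto|].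
        rewrite T3 in H1. right; left; eauto.
      * rewrite T3 in H1. right; left; eauto.
    + unfold up2o in H1; rewrite T3 in H1. right; right; eauto.
  - inversion H; subst. match goal with Hb : botty (tsub _ _ _ _) |- _ => apply IHA in Hb; destruct Hb as [H1|[[m [k H1]]|[m [k H1]]]] end.
    + left; constructor; auto.
    + unfold upmu_o in H1; rewrite T3 in H1. right; left; eauto.
    + unfold upmu_s in H1. destruct (m =? n).
      * destruct k; [simpl in H1; exfalso; eapply botty_atom_PS; eauto|].
        rewrite T3 in H1. right; right; eauto.
      * rewrite T3 in H1. right; right; eauto.
Qed.

Lemma U7 : forall A n k p, sym_occ n k A -> sym_occ_pol n k p A \/ sym_occ_pol n k (negb p) A.
Proof.
  induction A; intros n0 k p H; simpl in H; simpl; try contradiction.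
  - destruct H; subst. destruct p; simpl; auto.
  - destruct H as [H|H].
    + destruct (IHA1 _ _ (negb p) H) as [H0|H0]; [left|right]; left; auto.
    + destruct (IHA2 _ _ p H); [left|right]; right; auto.
  - auto.
  - auto.
  - auto.
Qed.

Lemma occ_params m' k m j : pv_occ m j (PV k (params m')) <-> m = m' /\ j = k.
Proof. simpl. rewrite length_params. split; intros [H1 H2]; auto. Qed.

Lemma Abad : forall A s b, Bad b (tsub s idpv idps A) <-> Bad b A.
Proof.
  intros A s b. split; [|apply U4].
  intro H. apply U3 in H. destruct H as [H|[[m [k [b' [_ H]]]]|[m [k [q [_ H]]]]]]; auto;
    simpl in H; contradiction.
Qed.

Lemma Aocc : forall A s m j, pv_occ m j (tsub s idpv idps A) <-> pv_occ m j A.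
Proof.
  intros A s m j. split.
  - intro H. apply U1 in H. destruct H as [[m' [k [H1 H2]]]|[m' [k [H1 H2]]]].
    + unfold idpv in H2. simpl in H2. rewrite length_params in H2. destruct H2; subst; auto.
    + simpl in H2. contradiction.
  - intro H. eapply U2; eauto. unfold idpv. apply occ_params. auto.
Qed.

Lemma Abotty : forall A s, botty (tsub s idpv idps A) <-> botty A.
Proof.
  intros A s. split; [|intros; apply U6; auto].
  intro H. apply U6r in H. destruct H as [H|[[m [k H]]|[m [k H]]]]; auto; inversion H.
Qed.

Definition pv2 (n : nat) (G : ty) : nat -> nat -> ty :=
  fun m X => if m =? n then match X with 0 => G | S X' => PV X' (params m) end
             else PV X (params m).

Lemma subst2_eq n A G : subst2 n A G = tsub FVar (pv2 n G) idps A.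
Proof. reflexivity. Qed.

Lemma S2badR n A G b : Bad b (subst2 n A G) -> Bad b A \/ pv_occ n 0 A.
Proof.
  rewrite subst2_eq. intro H. apply U3 in H.
  destruct H as [H|[[m [k [b' [H1 H]]]]|[m [k [q [_ H]]]]]]; auto; [|simpl in H; contradiction].
  unfold pv2 in H. destruct (Nat.eqb_spec m n).
  - subst. destruct k; auto. simpl in H; contradiction.
  - simpl in H; contradiction.
Qed.

Lemma S2occF n A G m j : pv_occ m j (All2 n A) -> pv_occ m j (subst2 n A G).
Proof.
  rewrite subst2_eq. simpl. intro H. eapply U2; eauto. unfold pv2.
  destruct (Nat.eqb_spec m n); destruct (Nat.eqb_spec n m); try lia.
  - subst. apply occ_params. auto.
  - apply occ_params. auto.
Qed.

Lemma S2occR n A G m j : pv_occ m j (subst2 n A G) -> pv_occ n 0 A \/ pv_occ m j (All2 n A).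
Proof.
  rewrite subst2_eq. intro H. apply U1 in H.
  destruct H as [[m' [k [H1 H2]]]|[m' [k [H1 H2]]]]; [|simpl in H2; contradiction].
  unfold pv2 in H2. simpl. destruct (Nat.eqb_spec m' n).
  - subst m'. destruct k; auto. simpl in H2. rewrite length_params in H2. destruct H2; subst.
    rewrite Nat.eqb_refl. auto.
  - simpl in H2. rewrite length_params in H2. destruct H2; subst. rewrite eqb_neq' by auto. auto.
Qed.

Definition psU (n : nat) (D : ty) : nat -> nat -> ty :=
  fun m C => if m =? n then
               match C with 0 => Mu n (tfsub (upn_f n (shiftf n)) idr idr D) (params n)
                          | S C' => PS C' (params m) end
             else PS C (params m).

Lemma unfold_eq n D ts : unfold n D ts = tsub (inst_f n ts) idpv (psU n D) D.
Proof. reflexivity. Qed.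

Lemma UbadF n D ts : sym_occ n 0 D -> ~ sym_occ_pol n 0 false D -> Bad false (unfold n D ts).
Proof.
  intros H1 H2. destruct (U7 _ _ _ true H1) as [H|H]; [|contradiction].
  rewrite unfold_eq. eapply U5; eauto. unfold psU. rewrite Nat.eqb_refl. simpl. auto.
Qed.

Lemma UbadR n D ts : ~ sym_occ_pol n 0 false D -> Bad true (unfold n D ts) -> Bad true D.
Proof.
  rewrite unfold_eq. intros H0 H. apply U3 in H.
  destruct H as [H|[[m [k [b' [H1 H]]]]|[m [k [q [H1 H]]]]]]; auto; [simpl in H; contradiction|].
  unfold psU in H. destruct (Nat.eqb_spec m n).
  - subst. destruct k; [|simpl in H; contradiction].
    destruct q; [|contradiction]. simpl in H. destruct H as [H|H]; [|discriminate].
    rewrite T2 in H. auto.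
  - simpl in H; contradiction.
Qed.

Lemma UoccR n D ts m j : pv_occ m j (unfold n D ts) -> pv_occ m j D.
Proof.
  rewrite unfold_eq. intro H. apply U1 in H.
  destruct H as [[m' [k [H1 H2]]]|[m' [k [H1 H2]]]].
  - unfold idpv in H2. simpl in H2. rewrite length_params in H2. destruct H2; subst; auto.
  - unfold psU in H2. destruct (m' =? n); [destruct k|]; simpl in H2; try contradiction.
    rewrite T1idr in H2. auto.
Qed.

Lemma UoccF n D ts m j : pv_occ m j D -> pv_occ m j (unfold n D ts).
Proof. rewrite unfold_eq. intro H. eapply U2; eauto. apply occ_params; auto. Qed.

Lemma UbottyR n D ts : botty (unfold n D ts) -> botty D.
Proof.
  rewrite unfold_eq. intro H. apply U6r in H.
  destruct H as [H|[[m [k H]]|[m [k H]]]]; auto; [inversion H|].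
  unfold psU in H. destruct (m =? n); [destruct k|]; inversion H; subst.
  rewrite T3 in H1. auto.
Qed.


Lemma subBad E : forall A B, sub E A B ->
  (Bad false B -> Bad false A) /\ (Bad true A -> Bad true B) /\
  (forall m j, pv_occ m j B -> pv_occ m j A \/ Bad false A) /\
  (forall m j, pv_occ m j A -> pv_occ m j B \/ Bad true B).
Proof.
  induction 1.
  - repeat split; auto.
  - destruct IHsub1 as [a1 [a2 [a3 a4]]]. destruct IHsub2 as [b1 [b2 [b3 b4]]].
    simpl. repeat split.
    + intros [h|h]; [left; auto|right; auto].
    + intros [h|h]; [left; auto|right; auto].
    + intros m j [h|h].
      * destruct (a4 _ _ h); auto.
      * destruct (b3 _ _ h); auto.
    + intros m j [h|h].
      * destruct (a3 _ _ h); auto.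
      * destruct (b4 _ _ h); auto.
  - destruct IHsub as [a1 [a2 [a3 a4]]]. unfold subst1 in *. simpl. repeat split.
    + intro h. apply a1 in h. rewrite Abad in h. auto.
    + intro h. apply a2. rewrite Abad. auto.
    + intros m j h. destruct (a3 _ _ h) as [h'|h']; [rewrite Aocc in h'|rewrite Abad in h']; auto.
    + intros m j h. apply a4. rewrite Aocc. auto.
  - destruct IHsub as [a1 [a2 [a3 a4]]]. simpl. repeat split.
    + intro h. apply a1 in h. apply S2badR in h. destruct h; intuition auto.
    + intros [h|[h _]]; [|discriminate]. apply a2. rewrite subst2_eq. apply U4. auto.
    + intros m j h. destruct (a3 _ _ h) as [h'|h'].
      * apply S2occR in h'. destruct h'; intuition auto.
      * apply S2badR in h'. destruct h'; intuition auto.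
    + intros m j h. apply a4. apply S2occF. auto.
  - destruct IHsub as [a1 [a2 [a3 a4]]]. unfold lift1 in *. simpl. repeat split.
    + intro h. apply a1 in h. rewrite T2 in h. auto.
    + intro h. apply a2. rewrite T2. auto.
    + intros m j h. destruct (a3 _ _ h) as [h'|h']; [rewrite T1idr in h'|rewrite T2 in h']; auto.
    + intros m j h. apply a4. rewrite T1idr. auto.
  - destruct IHsub as [a1 [a2 [a3 a4]]]. unfold liftv in *. simpl. repeat split.
    + intros [h|[_ h]].
      * apply a1 in h. rewrite T2 in h. auto.
      * destruct (a3 _ _ h) as [h'|h'].
        -- exfalso. eapply T1sh0; eauto.
        -- rewrite T2 in h'. auto.
    + intro h. left. apply a2. rewrite T2. auto.
    + intros m j h. destruct (a3 _ _ h) as [h'|h'].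
      * rewrite T1sh in h'. auto.
      * rewrite T2 in h'. auto.
    + intros m j h. rewrite <- (T1sh _ FVar idr n) in h. destruct (a4 _ _ h); auto.
  - destruct IHsub as [a1 [a2 [a3 a4]]]. unfold subst1 in *. repeat split.
    + intro h. rewrite Abad in h. apply a1. rewrite Abad. auto.
    + intro h. rewrite Abad. apply a2 in h. rewrite Abad in h. auto.
    + intros m j h. apply a3. rewrite Aocc in *. auto.
    + intros m j h. rewrite !Aocc. rewrite !Abad in *. destruct (a4 _ _ h) as [h'|h'];
        [rewrite Aocc in h'|rewrite Abad in h']; auto.
  - destruct IHsub1 as [a1 [a2 [a3 a4]]]. destruct IHsub2 as [b1 [b2 [b3 b4]]]. repeat split.
    + auto.
    + auto.
    + intros m j h. destruct (b3 _ _ h); auto.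
    + intros m j h. destruct (a4 _ _ h); auto.
  - destruct H as [_ [Ho [Hn _]]]. assert (Hf := UbadF n D ts Ho Hn). simpl. repeat split.
    + auto.
    + intro h. left. eapply UbadR; eauto.
    + auto.
    + intros m j h. left. eapply UoccR; eauto.
  - destruct H as [_ [Ho [Hn _]]]. simpl. repeat split.
    + auto.
    + intros [h|h]; [|discriminate]. rewrite unfold_eq. apply U4. auto.
    + auto.
    + intros m j h. left. apply UoccF. auto.
  - destruct IHsub as [a1 [a2 [a3 a4]]]. simpl. repeat split.
    + auto.
    + intros [h|h]; [|discriminate]. unfold instx. apply U4. apply a2. unfold substC. apply U4. auto.
    + auto.
    + intros m j h. unfold substC in a4. destruct (a4 m j) as [h'|h'].
      * eapply U2; eauto. apply occ_params; auto.
      * left. unfold instx. eapply U2; eauto. apply occ_params; auto.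
      * right. unfold instx. apply U4. auto.
Qed.

Lemma subBotty E : forall A B, sub E A B -> botty A -> botty B.
Proof.
  induction 1; intro h; auto.
  - inversion h; subst. constructor; auto.
  - apply IHsub. inversion h; subst. unfold subst1. apply U6. auto.
  - apply IHsub. inversion h; subst. rewrite subst2_eq. apply U6. auto.
  - constructor. apply IHsub. unfold lift1. rewrite T3. auto.
  - constructor. apply IHsub. unfold liftv. rewrite T3. auto.
  - unfold subst1 in *. rewrite Abotty in *. auto.
  - constructor. eapply UbottyR; eauto.
  - inversion h; subst. rewrite unfold_eq. apply U6. auto.
  - inversion h; subst. unfold instx. apply U6. apply IHsub. unfold substC. apply U6. auto.
Qed.

Fixpoint free (x : nat) (t : lterm) : Prop :=
  match t with
  | Var y => x = y
  | Lam y u => x <> y /\ free x u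
  | App f u => free x f \/ free x u
  end.

Fixpoint neutral (t : lterm) : Prop :=
  match t with Var _ => True | App f _ => neutral f | Lam _ _ => False end.

Fixpoint head (t : lterm) : nat :=
  match t with Var x => x | App f _ => head f | Lam x _ => x end.

Fixpoint size (t : lterm) : nat :=
  match t with Var _ => 1 | Lam _ u => S (size u) | App f u => S (size f + size u) end.

Lemma lookup_map f x G :
  lookup x (map (fun p => (fst p, f (snd p))) G) = option_map f (lookup x G).
Proof.
  induction G as [|[y A] G IH]; simpl; auto. destruct (x =? y); auto.
Qed.

Definition Inv (S : nat -> bool) (G : ctx) : Prop :=
  forall x T, lookup x G = Some T -> (S x = true -> botty T) /\ (S x = false -> ~ Bad false T).

Lemma Inv_map S G s zv zs : Inv S G -> Inv S (map (fun p => (fst p, tfsub s zv zs (snd p))) G).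
Proof.
  intros HI x T H. rewrite lookup_map in H. destruct (lookup x G) eqn:E; [|discriminate].
  simpl in H. injection H; intros; subst. destruct (HI _ _ E) as [h1 h2].
  rewrite T3, T2. auto.
Qed.

Lemma botty_bad T : botty T -> Bad true T.
Proof. induction 1; simpl; auto. Qed.

Lemma normal_neutral f : normal f -> match f with Lam _ _ => False | _ => True end -> neutral f.
Proof.
  induction f; simpl; auto. intros [h1 [h2 h3]] _. apply IHf1; auto.
Qed.

Definition Main E t := forall G T, typing E G t T -> normal t -> forall S, Inv S G ->
  ~ Bad true T -> forall z, S z = true -> ~ free z t.

Definition Neu E t := forall G T, typing E G t T -> normal t -> neutral t -> forall S, Inv S G ->
  (S (head t) = true /\ botty T) \/
  (S (head t) = false /\ (exists H, lookup (head t) G = Some H /\ ~ Bad false T /\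
                    forall m k, pv_occ m k T -> pv_occ m k H) /\
   forall z, S z = true -> ~ free z t).

Lemma lookup_map_some f x G H : lookup x (map (fun p => (fst p, f (snd p))) G) = Some H ->
  exists H0, lookup x G = Some H0 /\ H = f H0.
Proof.
  rewrite lookup_map. destruct (lookup x G); simpl; intro h; [|discriminate].
  injection h; intros; subst. eauto.
Qed.

Lemma neu_of E n (IHn : forall t, size t < n -> Main E t /\ Neu E t) :
  forall G t T, typing E G t T -> size t <= n -> normal t -> neutral t -> forall S, Inv S G ->
  (S (head t) = true /\ botty T) \/
  (S (head t) = false /\ (exists H, lookup (head t) G = Some H /\ ~ Bad false T /\
                    forall m k, pv_occ m k T -> pv_occ m k H) /\
   forall z, S z = true -> ~ free z t).
Proof.
  induction 1; intros Hs Hn Hne S HI; simpl in *.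
  - destruct (HI _ _ H0) as [h1 h2]. destruct (S x) eqn:E1.
    + left; auto.
    + right. split; auto. split.
      * exists A. repeat split; auto.
      * intros z Hz Hf. subst. congruence.
  - contradiction.
  - destruct Hn as [Hn1 [Hn2 Hn3]].
    destruct (IHn t ltac:(lia)) as [_ Nt]. destruct (IHn u ltac:(lia)) as [Mu' _].
    destruct (Nt _ _ H0 Hn1 Hne S HI) as [[h1 h2]|[h1 [[Hh [h2 [h3 h4]]] h5]]].
    + left. split; auto. inversion h2; auto.
    + right. split; auto. split.
      * exists Hh. simpl in h3. repeat split; auto.
        intros m k hk. apply h4. simpl; auto.
      * intros z Hz [Hf|Hf]; [eapply h5; eauto|].
        eapply Mu'; eauto. simpl in h3. intro; apply h3; auto.
  - destruct (IHtyping Hs Hn Hne S (Inv_map S G (shiftf 1) idr idr HI))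
      as [[h1 h2]|[h1 [[Hh [h2 [h3 h4]]] h5]]].
    + left; split; auto. constructor; auto.
    + right. split; auto. split; auto.
      apply lookup_map_some in h2. destruct h2 as [Hz [h2 ->]].
      exists Hz. repeat split; auto. intros m k hk. apply h4 in hk. unfold lift1 in hk. rewrite T1idr in hk. auto.
  - destruct (IHtyping Hs Hn Hne S (Inv_map S G FVar (shift_p n0) idr HI))
      as [[h1 h2]|[h1 [[Hh [h2 [h3 h4]]] h5]]].
    + left; split; auto. constructor; auto.
    + right. split; auto. split; auto.
      apply lookup_map_some in h2. destruct h2 as [Hz [h2 ->]].
      exists Hz. repeat split; auto.
      * intros [hb|[_ hb]]; auto. apply h4 in hb. unfold liftv in hb. eapply T1sh0; eauto.
      * intros m k hk. apply h4 in hk. unfold liftv in hk. apply T1sh in hk. auto.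
  - destruct (IHtyping Hs Hn Hne S HI) as [[h1 h2]|[h1 [[Hh [h2 [h3 h4]]] h5]]].
    + left; split; auto. inversion h2; subst. unfold subst1. apply U6. auto.
    + right. split; auto. split; auto. exists Hh. unfold subst1. rewrite Abad. repeat split; auto.
      intros m k hk. rewrite Aocc in hk. apply h4. auto.
  - destruct (IHtyping Hs Hn Hne S HI) as [[h1 h2]|[h1 [[Hh [h2 [h3 h4]]] h5]]].
    + left; split; auto. inversion h2; subst. rewrite subst2_eq. apply U6. auto.
    + right. split; auto. split; auto. exists Hh. repeat split; auto.
      * intro hb. apply S2badR in hb. apply h3. destruct hb; auto.
      * intros m k hk. apply S2occR in hk. destruct hk as [hk|hk]; auto.
        exfalso. apply h3. auto.
  - destruct (IHtyping Hs Hn Hne S HI) as [[h1 h2]|[h1 [[Hh [h2 [h3 h4]]] h5]]].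
    + left; split; auto. unfold subst1 in *. rewrite Abotty in *. auto.
    + right. split; auto. split; auto. exists Hh. unfold subst1 in *.
      rewrite Abad in *. repeat split; auto.
      intros m k hk. rewrite Aocc in hk. apply h4. rewrite Aocc. auto.
  - destruct (IHtyping Hs Hn Hne S HI) as [[h1 h2]|[h1 [[Hh [h2 [h3 h4]]] h5]]].
    + left; split; auto. eapply subBotty; eauto.
    + right. split; auto. split; auto. exists Hh.
      match goal with hs : sub _ _ _ |- _ => destruct (subBad _ _ _ hs) as [b1 [b2 [b3 b4]]] end.
      repeat split; auto.
      intros m k hk. destruct (b3 _ _ hk); auto. contradiction.
  - contradiction.
Qed.

Lemma main_of E n (IHn : forall t, size t < n -> Main E t /\ Neu E t) :
  forall G t T, typing E G t T -> size t <= n -> normal t -> forall S, Inv S G ->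
  ~ Bad true T -> forall z, S z = true -> ~ free z t.
Proof.
  induction 1; intros Hs Hn S HI HB; simpl in *.
  - intros z Hz Hf. subst. destruct (HI _ _ H0) as [h1 h2]. apply HB. apply botty_bad. auto.
  - intros z Hz [Hzx Hf].
    set (S' := fun y => S y && negb (y =? x)).
    assert (HI' : Inv S' ((x, A) :: G)).
    { intros y T Hl. simpl in Hl. unfold S'. destruct (Nat.eqb_spec y x).
      - injection Hl; intros; subst. rewrite andb_false_r. split; [discriminate|].
        intros _ hb. apply HB. auto.
      - rewrite andb_true_r. apply HI. auto. }
    eapply (IHtyping ltac:(lia) Hn S' HI'); [| |exact Hf].
    + intro hb. apply HB. auto.
    + unfold S'. rewrite Hz. simpl. destruct (Nat.eqb_spec z x); auto.
  - destruct Hn as [Hn1 [Hn2 Hn3]].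
    destruct (IHn t ltac:(lia)) as [_ Nt]. destruct (IHn u ltac:(lia)) as [Mu' _].
    assert (Hne : neutral t) by (apply normal_neutral; auto).
    destruct (Nt _ _ H0 Hn1 Hne S HI) as [[h1 h2]|[h1 [[Hh [h2 [h3 h4]]] h5]]].
    + exfalso. inversion h2; subst. apply HB. apply botty_bad. auto.
    + intros z Hz [Hf|Hf]; [eapply h5; eauto|].
      eapply Mu'; eauto. simpl in h3. intro; apply h3; auto.
  - apply (IHtyping Hs Hn S (Inv_map S G (shiftf 1) idr idr HI)). auto.
  - apply (IHtyping Hs Hn S (Inv_map S G FVar (shift_p n0) idr HI)). auto.
  - apply (IHtyping Hs Hn S HI). intro hb. apply HB. unfold subst1. apply U4. auto.
  - apply (IHtyping Hs Hn S HI). intros [hb|[hb _]]; [|discriminate].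
    apply HB. rewrite subst2_eq. apply U4. auto.
  - apply (IHtyping Hs Hn S HI). unfold subst1 in *. rewrite Abad in *. auto.
  - apply (IHtyping Hs Hn S HI). intro hb. apply HB.
    match goal with hs : sub _ _ _ |- _ => destruct (subBad _ _ _ hs) as [b1 [b2 [b3 b4]]] end.
    auto.
  - simpl in Hn. tauto.
Qed.

Lemma all_main E : forall n t, size t < n -> Main E t /\ Neu E t.
Proof.
  induction n; intros t Hs; [lia|]. split.
  - intros G T Ht Hn S HI HB. eapply main_of; eauto. lia.
  - intros G T Ht Hn Hne S HI. eapply neu_of; eauto. lia.
Qed.

Lemma strengthen E : forall G t T, typing E G t T -> forall G',
  (forall x, free x t -> lookup x G' = lookup x G) -> typing E G' t T.
Proof.
  induction 1; intros G' HG; simpl in HG.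
  - apply ty_var; auto. rewrite HG; auto.
  - apply ty_lam; auto. apply IHtyping. intros z Hz. simpl.
    destruct (Nat.eqb_spec z x); auto.
  - eapply ty_app; eauto.
  - apply ty_all1_i; auto. apply IHtyping. intros z Hz. rewrite !lookup_map, HG; auto.
  - apply ty_all2_i; auto. apply IHtyping. intros z Hz. rewrite !lookup_map, HG; auto.
  - apply ty_all1_e; auto.
  - apply ty_all2_e; auto.
  - eapply ty_eq; eauto.
  - eapply ty_sub; eauto.
  - apply ty_Y; auto. apply IHtyping. intros z Hz. rewrite !lookup_map, HG; auto.
Qed.

Lemma om_nobad : forall A, (omp A -> no_bot A -> ~ Bad true A) /\ (omn A -> no_bot A -> ~ Bad false A).
Proof.
  induction A; split; intros Ho Hb; simpl in *; try contradiction; try tauto; try (intro; discriminate).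
  - inversion Ho; subst. destruct Hb. intros [h|h]; [eapply (proj2 IHA1)|eapply (proj1 IHA2)]; eauto.
  - inversion Ho; subst. destruct Hb. intros [h|h]; [eapply (proj1 IHA1)|eapply (proj2 IHA2)]; eauto.
  - inversion Ho; subst. apply IHA; auto.
  - inversion Ho; subst. apply IHA; auto.
  - inversion Ho; subst. intros [h|[h _]]; [eapply (proj1 IHA); eauto|discriminate].
  - inversion Ho; subst. intros [h|[_ h]]; [eapply (proj2 IHA); eauto|contradiction].
  - inversion Ho; subst. intros [h|h]; [eapply (proj1 IHA); eauto|discriminate].
  - inversion Ho.
Qed.

Lemma lookup_app x G1 G2 : lookup x (G1 ++ G2) =
  match lookup x G1 with Some T => Some T | None => lookup x G2 end.
Proof.
  induction G1 as [|[y A] G IH]; simpl; auto. destruct (x =? y); auto.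
Qed.

Lemma lookup_In x G T : lookup x G = Some T -> In (x, T) G.
Proof.
  induction G as [|[y A] G IH]; simpl; [discriminate|].
  destruct (Nat.eqb_spec x y); intro h; [injection h; intros; subst; auto|auto].
Qed.

Lemma lookup_none x G : ~ In x (map fst G) -> lookup x G = None.
Proof.
  induction G as [|[y A] G IH]; simpl; auto. intro h.
  destruct (Nat.eqb_spec x y); [subst; tauto|]. apply IH. tauto.
Qed.

Lemma lookup_fst x G T : lookup x G = Some T -> In x (map fst G).
Proof. intro h. apply lookup_In in h. apply (in_map fst) in h. auto. Qed.

Lemma nodup_disj {X} (l1 l2 : list X) x : NoDup (l1 ++ l2) -> In x l1 -> ~ In x l2.
Proof.
  induction l1; simpl; [tauto|]. intros h [->|hi] hi2; inversion h; subst.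
  - apply H1. apply in_or_app. auto.
  - eapply IHl1; eauto.
Qed.

Lemma inS x l : existsb (Nat.eqb x) l = true <-> In x l.
Proof.
  rewrite existsb_exists. split.
  - intros [y [h1 h2]]. apply Nat.eqb_eq in h2. subst; auto.
  - intro h. exists x. rewrite Nat.eqb_refl. auto.
Qed.

Theorem lemma6p2 (E : fterm -> fterm -> Prop) (t : lterm)
  (xs ys : list (nat * ty)) (A : ty) :
  normal t ->
  Forall (fun p => omn (snd p) /\ no_bot (snd p) /\ wf (snd p)) xs ->
  omp A -> no_bot A -> wf A ->
  Forall (fun p => botty (snd p) /\ wf (snd p)) ys ->
  NoDup (map fst (xs ++ ys)) ->
  typing E (xs ++ ys) t A ->
  typing E xs t A.
Proof.
  intros Hn Hxs Hp Hnb Hwf Hys Hnd Ht.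
  rewrite map_app in Hnd.
  set (Sb := fun x => existsb (Nat.eqb x) (map fst ys)).
  assert (HI : Inv Sb (xs ++ ys)).
  { intros x T Hl. rewrite lookup_app in Hl. destruct (lookup x xs) eqn:E1.
    - injection Hl; intros; subst. split.
      + intro hs. unfold Sb in hs. rewrite inS in hs. exfalso.
        eapply nodup_disj; eauto. eapply lookup_fst; eauto.
      + intros _. apply lookup_In in E1. rewrite Forall_forall in Hxs.
        destruct (Hxs _ E1) as [h1 [h2 _]]. simpl in *. apply (proj2 (om_nobad T)); auto.
    - split.
      + intros _. apply lookup_In in Hl. rewrite Forall_forall in Hys.
        destruct (Hys _ Hl) as [h1 _]. auto.
      + intro hs. exfalso. unfold Sb in hs. apply lookup_fst in Hl.
        rewrite <- inS in Hl. congruence. }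
  assert (HM : Main E t) by (apply (all_main E (S (size t))); lia).
  apply (strengthen E _ _ _ Ht). intros x Hf.
  rewrite lookup_app. destruct (lookup x xs); auto.
  symmetry. apply lookup_none. intro hi. rewrite <- inS in hi.
  eapply (HM _ _ Ht Hn Sb HI); eauto. apply (proj1 (om_nobad A)); auto.
Qed.
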